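(* Let $\mathcal{A}$ be a separating union-closed family with base set $[n]$ and height $h$, and suppose $h = 4 \leq n$ and $0 \leq |\mathcal{B}(\mathcal{A})| \leq 2$. Then \[\mathrm{Avg}(\mathcal{A})=\frac{\sum_{A \in \mathcal{A}}|A|}{|\mathcal{A}|} \geq \frac{n}{2}.\]
   Context: A family of sets $\mathcal{A}$ is union-closed if it is a finite family of distinct finite sets with at least one nonempty member set, and $X,Y\in\mathcal{A}$ implies $X\cup Y\in\mathcal{A}$ (the empty set may be a member). For a family $\mathcal{F}$, $b(\mathcal{F})=\bigcup_{F\in\mathcal{F}}F$; the base set $b(\mathcal{A})$ is denoted $[n]=\{1,\dots,n\}$. $\mathcal{A}$ is separating if for any two distinct $x,y\in[n]$ there is $A\in\mathcal{A}$ containing exactly one of $x,y$. A chain in $\mathcal{A}$ is a subfamily any two distinct members of which are comparable under proper inclusion; the height $h$ of $\mathcal{A}$ is the maximum size of a chain in $\mathcal{A}$. For real $x\ge 0$, $\mathcal{A}_{<x}=\{A\in\mathcal{A} : |A|<x\}$. For $\mathcal{S}\subseteq\mathcal{A}$ and $S\in\mathcal{S}$, $\mathrm{irr}_{\mathcal{S}}(S)=\{s\in S : s\notin b(\mathcal{S}\setminus\{S\})\}$, and $\mathcal{S}$ is irredundant if $\mathrm{irr}_{\mathcal{S}}(S)\neq\emptyset$ for every $S\in\mathcal{S}$. Set $B=b(\mathcal{A}_{<n/2})$, and let $\mathcal{B}=\mathcal{B}(\mathcal{A})$ denote any irredundant subfamily of $\mathcal{A}_{<n/2}$ of minimum size such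 that $b(\mathcal{B})=B$ (so $|\mathcal{B}|$ is well defined). $\mathrm{Avg}(\mathcal{A})$ denotes the average size of a member set of $\mathcal{A}$. *)

(* Defs.v *)
From mathcomp Require Import all_boot all_order all_algebra.
Set Implicit Arguments. Unset Strict Implicit. Unset Printing Implicit Defensive.

Section Defs.
Variable n : nat.
Notation fam := {set {set 'I_n}}.

Definition bU (F : fam) : {set 'I_n} := \bigcup_(X in F) X.

Definition union_closed (F : fam) : Prop :=
  (exists2 X, X \in F & X != set0) /\
  (forall X Y, X \in F -> Y \in F -> X :|: Y \in F).

Definition separating (F : fam) : Prop :=
  forall x y : 'I_n, x != y -> exists2 A, A \in F & (x \in A) != (y \in A).

Definition is_chain (C : fam) : bool :=
  [forall X in C, forall Y in C, (X != Y) ==> ((X \proper Y) || (Y \proper X))].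

Definition height (F : fam) : nat :=
  \max_(C in powerset F | is_chain C) #|C|.

Definition small_part (F : fam) : fam := [set A in F | (#|A|).*2 < n].

Definition irr (S : fam) (X : {set 'I_n}) : {set 'I_n} := X :\: bU (S :\ X).

Definition irredundant (S : fam) : bool := [forall X in S, irr S X != set0].

Definition B_candidate (F S : fam) : bool :=
  [&& S \subset small_part F, irredundant S & bU S == bU (small_part F)].

(* S is a valid choice of B(A): a candidate of minimum size *)
Definition is_B (F S : fam) : bool :=
  B_candidate F S && [forall S' : fam, B_candidate F S' ==> (#|S| <= #|S'|)].

Definition Avg (F : fam) : rat := (\sum_(A in F) #|A|)%:R / (#|F|)%:R.

End Defs.

(* Main.v *)
Require Import Defs.
From mathcomp Require Import all_boot all_order all_algebra.
From mathcomp Require Import zify ring.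
Import Order.TTheory GRing.Theory Num.Theory.
Set Implicit Arguments. Unset Strict Implicit. Unset Printing Implicit Defensive.

Lemma bigcup_in_F n (F S : {set {set 'I_n}}) X0 :
  (forall X Y, X \in F -> Y \in F -> X :|: Y \in F) ->
  S \subset F -> X0 \in S -> \bigcup_(X in S) X \in F.
Proof.
move=> uc sSF X0S.
have X0F : X0 \in F := subsetP sSF _ X0S.
suff : X0 :|: \bigcup_(X in S) X \in F.
  by rewrite (setUidPr _) //; exact: (bigcup_sup X0).
apply: (big_ind (fun Y => X0 :|: Y \in F)).
- by rewrite setU0.
- move=> Y1 Y2 h1 h2. have := uc _ _ h1 h2. by rewrite setUACA setUid.
- move=> X XS. apply: uc => //. exact: subsetP sSF _ XS.
Qed.

Lemma height_ge n (F C : {set {set 'I_n}}) : C \subset F -> is_chain C -> #|C| <= height F.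
Proof.
move=> sCF ch. rewrite /height.
apply: (leq_bigmax_cond (F:=fun C : {set {set 'I_n}} => #|C|)).
by rewrite powersetE sCF ch.
Qed.

Lemma chain_of_total n (C : {set {set 'I_n}}) :
  (forall X Y, X \in C -> Y \in C -> (X \subset Y) || (Y \subset X)) -> is_chain C.
Proof.
move=> h; apply/forallP => X; apply/implyP => XC; apply/forallP => Y; apply/implyP => YC.
apply/implyP => neq. case/orP: (h X Y XC YC) => s; apply/orP; [left|right];
  rewrite properEneq s ?andbT //. by rewrite eq_sym.
Qed.

Lemma no5 n (F : {set {set 'I_n}}) X1 X2 X3 X4 X5 : height F = 4 ->
  X1 \in F -> X2 \in F -> X3 \in F -> X4 \in F -> X5 \in F ->
  X1 \proper X2 -> X2 \proper X3 -> X3 \proper X4 -> X4 \proper X5 -> False.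
Proof.
move=> hF f1 f2 f3 f4 f5 p12 p23 p34 p45.
have p13 := proper_trans p12 p23. have p14 := proper_trans p13 p34.
have p15 := proper_trans p14 p45. have p24 := proper_trans p23 p34.
have p25 := proper_trans p24 p45. have p35 := proper_trans p34 p45.
have s12 := proper_sub p12. have s13 := proper_sub p13. have s14 := proper_sub p14.
have s15 := proper_sub p15. have s23 := proper_sub p23. have s24 := proper_sub p24.
have s25 := proper_sub p25. have s34 := proper_sub p34. have s35 := proper_sub p35.
have s45 := proper_sub p45.
pose C := X1 |: (X2 |: (X3 |: (X4 |: [set X5]))).
have : #|C| <= height F.
  apply: height_ge.
  - by apply/subsetP => X; rewrite !inE => /orP[/eqP->|/orP[/eqP->|/orP[/eqP->|/orP[/eqP->|/eqP->]]]].
  - apply: chain_of_total => X Y; rewrite !inE => /orP[/eqP->|/orP[/eqP->|/orP[/eqP->|/orP[/eqP->|/eqP->]]]] /orP[/eqP->|/orP[/eqP->|/orP[/eqP->|/orP[/eqP->|/eqP->]]]];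
    by rewrite ?subxx ?s12 ?s13 ?s14 ?s15 ?s23 ?s24 ?s25 ?s34 ?s35 ?s45 ?orbT.
have ne : forall A B : {set 'I_n}, A \proper B -> (A == B) = false.
  by move=> A B /properP [_ [x xB xA]]; apply/negbTE/eqP => e; rewrite e xB in xA.
rewrite hF /C !cardsU1 cards1 !inE.
by rewrite !ne.
Qed.

Lemma sum_disj (T : finType) (P : {set {set T}}) (Z : {set T}) (f : {set T} -> {set T}) :
  {in P, forall X, f X \subset Z} ->
  {in P &, forall X Y, X != Y -> [disjoint f X & f Y]} ->
  \sum_(X in P) #|f X| <= #|Z|.
Proof.
move=> sub dis.
have -> : \sum_(X in P) #|f X| = \sum_(X in P) \sum_(z in Z) (z \in f X).
  apply: eq_bigr => X XP.
  rewrite -big_mkcondr /= sum1_card.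
  apply: eq_card => z; rewrite -[RHS]topredE /=.
  case zf: (z \in f X); last by rewrite andbF.
  by rewrite andbT (subsetP (sub X XP)).
rewrite exchange_big /= -sum1_card.
apply: leq_sum => z zZ.
rewrite -big_mkcondr /= sum1_card.
apply/card_le1_eqP => X Y; rewrite -!topredE /= => /andP [XP zX] /andP [YP zY].
apply/eqP; apply: contraT => neq.
have := dis X Y XP YP; rewrite eq_sym neq => /(_ isT).
by rewrite disjoint_subset => /subsetP /(_ z zX); rewrite inE zY.
Qed.

Lemma poly1 b k : 1 <= k -> 4 <= 2 * b + k -> b * k + 2 * b + 2 * k <= (b + k - 1) * (2 * b + k).
Proof. move=> h1 h2. nia. Qed.

Lemma arith2 n b r t d g sA sM : n - b <= t + 1 -> g <= n - b -> d <= b -> r <= d -> sA + d = r * b -> sM + g = t * n -> 1 <= r -> b < n -> 4 <= n -> n * (r + 1 + (t + 1)) <= 2 * (b + sA + (n + sM)).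
Proof.
move=> h1 h2 h3 h4 h5 h6 h7 h8 h9.
suff H : r * n + 2 * n <= t * n + 2 * b + 2 * (r * b) by lia.
case: (leqP n (2*b)) => h.
  have e1 : r * n <= r * (2 * b) by rewrite leq_mul2l h orbT.
  case: t h1 h6 => [|[|t]] h1 h6.
  - have eb : b = n.-1 by lia.
    have e2 : r * n = r * b + r by rewrite eb -mulnSr prednK //; lia.
    have e3 : r * 4 <= r * n by rewrite leq_mul2l h9 orbT.
    lia.
  - lia.
  - have : 2 * n <= t.+2 * n by rewrite leq_mul2r; lia.
    lia.
have rb : r <= b by lia.
pose k := n - 2 * b.
have nk : n = 2 * b + k by rewrite /k; lia.
have e1 : r * n = 2 * (r * b) + r * k by rewrite nk mulnDr; lia.
have e2 : r * k <= b * k by rewrite leq_mul2r rb orbT.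
have e3 : (b + k - 1) * n <= t * n by rewrite leq_mul2r; lia.
have := @poly1 b k; rewrite -nk.
lia.
Qed.

Lemma prodb (s d e : nat) : d + 1 <= s -> e + 1 <= s ->
  ((Posz (2*s) - 1) * (2 * Posz d + 2 * Posz e + 1 - Posz (2*s)) <= 4 * Posz (d * e))%R.
Proof. move=> h1 h2. nia. Qed.
Lemma divb (s : nat) (x : int) : 2 <= s -> ((Posz (2*s) - 1) * x <= Posz (4 * (s * s)))%R -> (x <= Posz (4 * s))%R.
Proof. move=> h1 h2. nia. Qed.

Section Core.
Variable n : nat.
Variable F : {set {set 'I_n}}.
Variable B : {set 'I_n}.
Hypothesis uc : forall X Y, X \in F -> Y \in F -> X :|: Y \in F.
Hypothesis sep : separating F.
Hypothesis topF : setT \in F.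
Hypothesis hF : height F = 4.
Hypothesis n4 : 4 <= n.
Hypothesis BF : B \in F.
Hypothesis BT : B != setT.
Hypothesis large : forall A, A \in F -> ~~ (A \subset B) -> n <= 2 * #|A|.

Definition w (A : {set 'I_n}) : int := (2 * #|A|)%:Z - n%:Z.
Definition SA (P : {set {set 'I_n}}) := \sum_(A in P) #|A|.

Lemma sum_w (P : {set {set 'I_n}}) : (\sum_(A in P) w A = (2 * SA P)%:Z - (n * #|P|)%:Z)%R.
Proof.
rewrite /w sumrB /SA -!(big_morph _ PoszD (erefl (Posz 0))).
by rewrite sum_nat_const -big_distrr /= mulnC [(n * _)%N]mulnC.
Qed.


Definition G := [set A in F | A \subset B].
Definition Mp := [set A in F | B \proper A].
Definition M' := Mp :\ setT.

Lemma w_ge0 A : A \in F -> ~~ (A \subset B) -> (0 <= w A)%R.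
Proof. move=> AF nAB; have := large AF nAB; rewrite /w; lia. Qed.

Lemma proper_notsub (A : {set 'I_n}) : B \proper A -> ~~ (A \subset B).
Proof.
move=> /properP [sBA [x xA xB]]. apply/negP => /subsetP /(_ x xA).
by rewrite (negbTE xB).
Qed.

Lemma split_sum : (\sum_(A in G) w A + \sum_(A in Mp) w A <= \sum_(A in F) w A)%R.
Proof.
rewrite [X in (_ <= X)%R](bigID (fun A : {set 'I_n} => A \subset B)) /=.
have -> : (\sum_(A in G) w A = \sum_(A in F | A \subset B) w A)%R.
  by apply: eq_bigl => A; rewrite inE.
apply: lerD => //.
rewrite [X in (_ <= X)%R](bigID (fun A : {set 'I_n} => B \proper A)) /=.
have -> : (\sum_(A in Mp) w A = \sum_(A | (A \in F) && ~~ (A \subset B) && (B \proper A)) w A)%R.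
  apply: eq_bigl => A; rewrite inE.
  case pr: (B \proper A); rewrite ?andbT ?andbF //.
  by rewrite (proper_notsub pr) andbT.
rewrite lerDl. apply: sumr_ge0 => A /andP [/andP [AF nAB] _]. exact: w_ge0.
Qed.

Lemma sep_count :
  {in M' &, forall M1 M2, M1 != M2 -> M1 :|: M2 = setT} -> #|~: B| <= #|M'| + 1.
Proof.
move=> pairU.
pose f x := [pick M in M' | x \notin M].
have key : forall x y A, x \notin B -> y \notin B -> A \in F -> x \in A -> y \notin A ->
    f x != f y.
  move=> x y A xB yB AF xA yA.
  pose H := A :|: B.
  have HM : H \in M'.
    rewrite !inE uc //=. apply/andP; split.
      apply/negP => /eqP HT. by move: yA; rewrite -[y \notin A](negbK) (_ : y \in A) //; move: (in_setT y); rewrite -HT inE (negbTE yB) orbF.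
    apply/properP; split; first exact: subsetUr.
    by exists x; rewrite ?inE ?xA.
  have fy : f y = Some H.
    rewrite /f; case: pickP => [My|].
      move=> /andP [MyM yMy]. congr Some.
      apply/eqP; apply: contraT => neq.
      have := pairU _ _ MyM HM neq => /setP /(_ y). 
      by rewrite !inE (negbTE yMy) (negbTE yA) (negbTE yB).
    by move=> /(_ H) /=; rewrite HM /= !inE (negbTE yA) (negbTE yB).
  rewrite fy /f; case: pickP => [Mx|]; last by [].
  move=> /andP [_ xMx]. apply/eqP => [[e]].
  by move: xMx; rewrite e !inE xA.
have inj : {in ~: B &, injective f}.
  move=> x y; rewrite !inE => xB yB fxy.
  apply/eqP; apply: contraT => neq.
  have [A AF] := sep neq.
  case xA: (x \in A); case yA: (y \in A) => // _.
  - by have := key x y A xB yB AF; rewrite xA yA fxy eqxx => /(_ isT isT).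
  - by have := key y x A yB xB AF; rewrite xA yA fxy eqxx => /(_ isT isT).
rewrite -(card_in_imset inj).
have sub : f @: (~: B) \subset None |: (Some @: M').
  apply/subsetP => o /imsetP [x _ ->]. rewrite /f; case: pickP => [M|_]; last by rewrite !inE.
  move=> /andP [MM _]. by rewrite !inE imset_f.
apply: (leq_trans (subset_leq_card sub)).
rewrite cardsU1 (card_imset _ (@Some_inj _)) addnC.
by rewrite leq_add2l leq_b1.
Qed.


Lemma topMp : setT \in Mp.
Proof. by rewrite inE topF /= properEneq BT subsetT. Qed.

Lemma wT : w setT = Posz n.
Proof. rewrite /w cardsT card_ord; lia. Qed.

Lemma sumMp : (\sum_(A in Mp) w A = w setT + \sum_(A in M') w A)%R.
Proof. by rewrite (big_setD1 _ topMp). Qed.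

Lemma M'_notsub A : A \in M' -> (A \in F) && ~~ (A \subset B).
Proof. by rewrite !inE => /and3P [_ AF pr]; rewrite AF proper_notsub. Qed.

Lemma sumM'_ge0 : (0 <= \sum_(A in M') w A)%R.
Proof. apply: sumr_ge0 => A /M'_notsub /andP [AF nAB]; exact: w_ge0. Qed.

Lemma reduce : (0 <= \sum_(A in G) w A + \sum_(A in Mp) w A)%R -> (0 <= \sum_(A in F) w A)%R.
Proof. move=> h; exact: le_trans h split_sum. Qed.

Lemma case1 : (forall A, A \in F -> A \subset B -> A = B) -> (0 <= \sum_(A in F) w A)%R.
Proof.
move=> h1; apply: reduce.
have -> : G = [set B].
  apply/setP => A; rewrite !inE; apply/andP/eqP => [[AF sAB]|->]; first exact: h1.
  by rewrite BF subxx.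
rewrite big_set1 sumMp wT.
have := sumM'_ge0. rewrite /w. lia.
Qed.


Definition Aset := [set A in F | A \proper B].

Lemma union_max (T : {set 'I_n}) (X Y : {set 'I_n}) :
  X \in F -> Y \in F -> X \subset T -> Y \subset T -> X != Y -> X :|: Y != T ->
  exists2 Z1, Z1 \in F & exists2 Z2, Z2 \in F &
     [/\ Z1 \proper Z2, Z2 \proper T & (Z1 == X) || (Z1 == Y)].
Proof.
move=> XF YF sXT sYT neq nT.
have UF := uc XF YF.
have UT : X :|: Y \proper T by rewrite properEneq nT subUset sXT sYT.
case sYX: (Y \subset X).
  exists Y => //; exists X => //; split => //; last by rewrite eqxx orbT.
    by rewrite properEneq sYX eq_sym neq.
  by move: UT; rewrite (setUidPl sYX).
exists X => //; exists (X :|: Y) => //; split => //; last by rewrite eqxx.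
rewrite properEneq subsetUl andbT. apply/negP => /eqP e.
by move: sYX; rewrite e subsetUr.
Qed.

Section Case2.
Variable A0 : {set 'I_n}.
Hypothesis A0F : A0 \in F.
Hypothesis A0B : A0 \proper B.
Hypothesis h3 : forall X Y, X \in F -> Y \in F -> X \proper Y -> Y \proper B -> False.

Lemma Aset_union X Y : X \in Aset -> Y \in Aset -> X != Y -> X :|: Y = B.
Proof.
rewrite !inE => /andP [XF pX] /andP [YF pY] neq.
apply/eqP; apply: contraT => nT.
have [Z1 Z1F [Z2 Z2F [p12 p2 _]]] := union_max XF YF (proper_sub pX) (proper_sub pY) neq nT.
by case: (h3 Z1F Z2F p12 p2).
Qed.

Lemma M'_union X Y : X \in M' -> Y \in M' -> X != Y -> X :|: Y = setT.
Proof.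
rewrite !inE => /and3P [XT XF pX] /and3P [YT YF pY] neq.
apply/eqP; apply: contraT => nT.
have [Z1 Z1F [Z2 Z2F [p12 p2 /orP [] /eqP e]]] :=
  union_max XF YF (subsetT X) (subsetT Y) neq nT; subst Z1.
- by case: (no5 hF A0F BF XF Z2F topF A0B pX p12 p2).
- by case: (no5 hF A0F BF YF Z2F topF A0B pY p12 p2).
Qed.

Lemma case2 : (0 <= \sum_(A in F) w A)%R.
Proof.
apply: reduce.
set r := #|Aset|. set t := #|M'|.
set d := \sum_(A in Aset) #|B :\: A|.
set g := \sum_(A in M') #|~: A|.
have BG : B \in G by rewrite inE BF subxx.
have GD : G :\ B = Aset.
  apply/setP => A; rewrite !inE properEneq. by case: (A \in F); rewrite ?andbF // andbT.
have cG : #|G| = r + 1 by rewrite (cardsD1 B) BG GD addnC.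
have sG : SA G = #|B| + SA Aset by rewrite /SA (big_setD1 _ BG) GD.
have cMp : #|Mp| = t + 1 by rewrite (cardsD1 setT) topMp addnC.
have sMp : SA Mp = n + SA M' by rewrite /SA (big_setD1 _ topMp) cardsT card_ord.
have eA : SA Aset + d = r * #|B|.
  rewrite /SA /d -big_split /= -sum_nat_const. apply: eq_bigr => A.
  rewrite inE => /andP [_ pA]. rewrite -[in RHS](cardsID A B).
  by rewrite (setIidPr (proper_sub pA)).
have eM : SA M' + g = t * n.
  rewrite /SA /g -big_split /= -sum_nat_const. apply: eq_bigr => A _.
  by rewrite cardsC card_ord.
have dB : d <= #|B|.
  apply: sum_disj => [A _|X Y XA YA neq]; first exact: subsetDl.
  by rewrite -setI_eq0 -setDUr Aset_union // setDv.
have rd : r <= d.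
  rewrite /r -sum1_card /d. apply: leq_sum => A; rewrite inE => /andP [_ /properP [_ [x xB xA]]].
  by rewrite card_gt0; apply/set0Pn; exists x; rewrite inE xB xA.
have gB : g <= #|~: B|.
  apply: sum_disj => [A|X Y XM YM neq].
    rewrite !inE => /and3P [_ _ /proper_sub sBA]. by rewrite setCS.
  by rewrite -setI_eq0 -setCU M'_union // setCT.
have cB : #|~: B| = n - #|B| by have := cardsC B; rewrite card_ord; lia.
have sc := sep_count M'_union.
have bn : #|B| < n.
  have : B \proper setT by rewrite properEneq BT subsetT.
  by move/proper_card; rewrite cardsT card_ord.
have r1 : 1 <= r by rewrite card_gt0; apply/set0Pn; exists A0; rewrite inE A0F A0B.
have key : n * (r + 1 + (t + 1)) <= 2 * (#|B| + SA Aset + (n + SA M')).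
  rewrite cB in sc gB. exact: arith2 sc gB dB rd eA eM r1 bn n4.
rewrite !sum_w cG sG cMp sMp. lia.
Qed.

End Case2.

Lemma no4 X1 X2 X3 X4 : X1 \in F -> X2 \in F -> X3 \in F -> X4 \in F ->
  X1 \proper X2 -> X2 \proper X3 -> X3 \proper X4 -> X4 \subset B -> False.
Proof.
move=> f1 f2 f3 f4 p12 p23 p34 s4.
have p4 : X4 \proper setT.
  rewrite properEneq subsetT andbT. apply/eqP => e. move: s4; rewrite e => sTB.
  by move: BT; rewrite eqEsubset sTB subsetT.
exact: (no5 hF f1 f2 f3 f4 topF p12 p23 p34 p4).
Qed.

Lemma sub_sum_le (T : finType) (P Q : {set T}) (g : T -> int) :
  P \subset Q -> (forall x, x \in Q -> 0 <= g x)%R -> (\sum_(x in P) g x <= \sum_(x in Q) g x)%R.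
Proof.
move=> sPQ pos. rewrite [X in (_ <= X)%R](big_setID P) (setIidPr sPQ) lerDl.
apply: sumr_ge0 => x; rewrite inE => /andP [_ xQ]; exact: pos.
Qed.

Definition Up (X : {set 'I_n}) := [set A : {set 'I_n} | X \subset A].
Definition Cs (X1 X2 : {set 'I_n}) := ((G :&: Up X1) :\: Up X2) :\ X1.
Definition Is (X1 X2 : {set 'I_n}) := (G :\: Up X1) :\: Up X2.

Lemma decomp S1 S2 : S1 :|: S2 = B -> S1 \in F -> S2 \in F -> ~~ (S2 \subset S1) -> ~~ (S1 \subset S2) ->
  (\sum_(A in G) w A = w B + w S1 + w S2 + \sum_(A in Cs S1 S2) w A + \sum_(A in Cs S2 S1) w A
     + \sum_(A in Is S1 S2) w A)%R.
Proof.
move=> hU S1F S2F n21 n12.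
rewrite (big_setID (Up S1)) /= (big_setID (Up S2) (A := G :&: Up S1)) /=.
have -> : G :&: Up S1 :&: Up S2 = [set B].
  apply/setP => A; rewrite !inE. apply/idP/eqP => [/andP [/andP [/andP [AF AB] h1] h2]|->].
    by apply/eqP; rewrite eqEsubset AB -hU subUset h1 h2.
  by rewrite BF subxx -hU subsetUl subsetUr.
rewrite big_set1.
have S1in : S1 \in (G :&: Up S1) :\: Up S2 by rewrite !inE S1F subxx n21 -hU subsetUl.
rewrite (big_setD1 _ S1in) /=.
rewrite (big_setID (Up S2) (A := G :\: Up S1)) /=.
have S2in : S2 \in (G :\: Up S1) :&: Up S2 by rewrite !inE S2F subxx n12 -hU subsetUr.
rewrite (big_setD1 _ S2in) /=.
have -> : (G :\: Up S1) :&: Up S2 :\ S2 = Cs S2 S1.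
  apply/setP => A; rewrite !inE. by case: (A == S2); case: (S1 \subset A); case: (S2 \subset A); rewrite /= ?andbF ?andbT.
rewrite /Cs /Is. ring.
Qed.
Lemma sub_sum_ge (T : finType) (P Q : {set T}) (g : T -> int) :
  P \subset Q -> (forall x, x \in Q -> g x <= 0)%R -> (\sum_(x in Q) g x <= \sum_(x in P) g x)%R.
Proof.
move=> sPQ neg. rewrite -lerN2 -!sumrN. apply: sub_sum_le => // x xQ.
by rewrite oppr_ge0 neg.
Qed.

Lemma CsP X1 X2 Y : Y \in Cs X1 X2 -> [/\ Y \in F, Y \subset B, X1 \proper Y & ~~ (X2 \subset Y)].
Proof.
rewrite !inE => /andP [nY1 /andP [n2 /andP [/andP [YF YB] s1]]].
by split => //; rewrite properEneq eq_sym nY1 s1.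
Qed.

Lemma IsP X1 X2 A : A \in Is X1 X2 -> [/\ A \in F, A \subset B, ~~ (X1 \subset A) & ~~ (X2 \subset A)].
Proof. by rewrite !inE => /andP [n2 /andP [n1 /andP [AF AB]]]. Qed.

Lemma Is_sym X1 X2 : Is X1 X2 = Is X2 X1.
Proof. apply/setP => A; rewrite !inE. by case: (X1 \subset A); case: (X2 \subset A). Qed.

Section Case3.
Variables S1 S2 : {set 'I_n}.
Variable s : nat.
Hypothesis S1F : S1 \in F.
Hypothesis S2F : S2 \in F.
Hypothesis hU : S1 :|: S2 = B.
Hypothesis hI : S1 :&: S2 = set0.
Hypothesis c1 : #|S1| = s.
Hypothesis c2 : #|S2| = s.
Hypothesis hn : n = 2 * s + 1.
Hypothesis hs : 2 <= s.

Definition symm (X1 X2 : {set 'I_n}) := (X1 = S1 /\ X2 = S2) \/ (X1 = S2 /\ X2 = S1).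

Lemma symm_facts X1 X2 : symm X1 X2 ->
  [/\ X1 \in F, X2 \in F, X1 :|: X2 = B, X1 :&: X2 = set0 & #|X1| = s /\ #|X2| = s].
Proof. by case=> [[-> ->]|[-> ->]]; split; rewrite // ?(setUC S2) ?(setIC S2). Qed.

Lemma symm_swap X1 X2 : symm X1 X2 -> symm X2 X1.
Proof. by case=> [[-> ->]|[-> ->]]; [right|left]. Qed.

Lemma cB : #|B| = 2 * s.
Proof. have := cardsUI S1 S2; rewrite hU hI cards0 c1 c2; lia. Qed.

Lemma BX1 X1 X2 : symm X1 X2 -> X1 \subset B.
Proof. by case/symm_facts => _ _ <- _ _; rewrite subsetUl. Qed.

Lemma Cs_d X1 X2 Y : symm X1 X2 -> Y \in Cs X1 X2 -> #|Y| + #|B :\: Y| = 2 * s /\ #|B :\: Y| + 1 <= s.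
Proof.
move=> sy /CsP [YF YB pY _].
have [_ _ _ _ [h1 _]] := symm_facts sy.
have e : #|Y| + #|B :\: Y| = 2 * s by rewrite -cB -(cardsID Y B) (setIidPr YB).
split => //. have := proper_card pY. rewrite h1. move: e; clear; lia.
Qed.

Lemma Cs_union X1 X2 : symm X1 X2 -> {in Cs X1 X2 &, forall Y Z, Y != Z -> Y :|: Z = B}.
Proof.
move=> sy Y Z /CsP [YF YB pY _] /CsP [ZF ZB pZ _] neq.
have [X1F _ _ _ _] := symm_facts sy.
apply/eqP; apply: contraT => nT.
have [Z1 Z1F [Z2 Z2F [p12 p2 /orP [] /eqP e]]] := union_max YF ZF YB ZB neq nT; subst Z1.
- by case: (no4 X1F YF Z2F BF pY p12 p2 (subxx B)).
- by case: (no4 X1F ZF Z2F BF pZ p12 p2 (subxx B)).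
Qed.

Lemma Cs_sumd X1 X2 : symm X1 X2 -> \sum_(Y in Cs X1 X2) #|B :\: Y| <= s.
Proof.
move=> sy. have [_ _ hU' _ [_ h2]] := symm_facts sy. rewrite -h2.
apply: sum_disj => [Y /CsP [_ _ pY _]|Y Z YC ZC neq].
  apply/subsetP => x; rewrite inE -hU' inE => /andP [xY /orP [x1|//]].
  by move: xY; rewrite (subsetP (proper_sub pY) x x1).
by rewrite -setI_eq0 -setDUr (Cs_union sy YC ZC neq) setDv.
Qed.

Lemma Cs_w X1 X2 Y : symm X1 X2 -> Y \in Cs X1 X2 ->
  (w Y = Posz (2 * s) - 1 - 2 * Posz #|B :\: Y| /\ 1 <= w Y)%R.
Proof.
move=> sy YC. have [e le] := Cs_d sy YC. have := hn. rewrite /w. split; lia.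
Qed.

Lemma inner_step X1 X2 A : symm X1 X2 -> A \in F -> A \subset B -> ~~ (X1 \subset A) ->
  (A :|: X2 = X2) \/ (A :|: X2 \in Cs X2 X1).
Proof.
move=> sy AF AB n1. have [X1F X2F hU' hI' _] := symm_facts sy.
have X2B : X2 \subset B by rewrite -hU' subsetUr.
have n1' : ~~ (X1 \subset A :|: X2).
  apply: contra n1 => /subsetP h. apply/subsetP => x x1.
  have := h x x1; rewrite inE => /orP [//|x2].
  by have := in_set0 x; rewrite -hI' inE x1 x2.
case: (eqVneq (A :|: X2) X2) => [e|ne]; [left|right] => //.
by rewrite !inE ne n1' (uc AF X2F) /= subUset AB X2B subsetUr.
Qed.

Lemma inner_R X1 X2 A : symm X1 X2 -> A \in Is X1 X2 -> Cs X2 X1 != set0 -> A :|: X2 \in Cs X2 X1.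
Proof.
move=> sy /IsP [AF AB n1 n2] /set0Pn [X XC].
case: (inner_step sy AF AB n1) => // e.
have [X1F X2F hU' _ _] := symm_facts sy.
have pA : A \proper X2.
  rewrite properEneq; apply/andP; split; last by rewrite -e subsetUl.
  by apply: contraNneq n2 => ->; exact: subxx.
have [XF XB pX n1X] := CsP XC.
have pXB : X \proper B.
  rewrite properEneq XB andbT. apply: contraNneq n1X => ->. by rewrite -hU' subsetUl.
by case: (no4 AF X2F XF BF pA pX pXB (subxx B)).
Qed.

Lemma inner_sub X1 X2 A : symm X1 X2 -> A \in Is X1 X2 -> Cs X1 X2 = set0 -> A \subset X1.
Proof.
move=> sy /IsP [AF AB n1 n2] C0.
case: (inner_step (symm_swap sy) AF AB n2) => [e|]; last by rewrite C0 inE.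
by rewrite -e subsetUl.
Qed.

Lemma sum_g (P : {set {set 'I_n}}) :
  (\sum_(Y in P) (- (2 * Posz #|B :\: Y|) - 1) = - (2 * Posz (\sum_(Y in P) #|B :\: Y|)) - Posz #|P|)%R.
Proof.
rewrite sumrB sumrN -mulr_sumr -(big_morph _ PoszD (erefl (Posz 0))) sumr_const.
by rewrite [#|P|%:R%R]natz.
Qed.

Lemma np_eq p : n * p = 2 * s * p + p.
Proof. by rewrite hn mulnDl mul1n. Qed.

Lemma caseA X1 X2 : symm X1 X2 -> Cs X1 X2 = set0 ->
  (- Posz (4 * s) + 2 <= \sum_(A in Cs X1 X2) w A + \sum_(A in Cs X2 X1) w A + \sum_(A in Is X1 X2) w A)%R.
Proof.
move=> sy C0. rewrite C0 big_set0 add0r.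
have [X1F X2F hU' hI' [h1 h2]] := symm_facts sy.
have sub1 : forall A, A \in Is X1 X2 -> A \subset X1 := fun A AI => inner_sub sy AI C0.
case: (set_0Vmem (Cs X2 X1)) => [R0|[X XR]].
  rewrite R0 big_set0 add0r.
  have sub0 : Is X1 X2 \subset [set set0].
    apply/subsetP => A AI. rewrite inE.
    have [AF AB n1 n2] := IsP AI.
    case: (inner_step sy AF AB n1) => [e|]; last by rewrite R0 inE.
    have A2 : A \subset X2 by rewrite -e subsetUl.
    by rewrite -subset0 -hI' subsetI sub1 // A2.
  apply: le_trans (sub_sum_ge sub0 _).
    rewrite big_set1 /w cards0; move: hn hs; clear; lia.
  move=> x; rewrite inE => /eqP ->; rewrite /w cards0; clear; lia.
have R1 : Cs X2 X1 != set0 by apply/set0Pn; exists X.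
pose f A := A :|: X2.
pose g (Y : {set 'I_n}) : int := (- (2 * Posz #|B :\: Y|) - 1)%R.
have fR : forall A : {set 'I_n}, A \in Is X1 X2 -> f A \in Cs X2 X1 := fun A AI => inner_R sy AI R1.
have back : forall A : {set 'I_n}, A \subset X1 -> f A :&: X1 = A.
  move=> A A1. by rewrite /f setIUl (setIidPl A1) setIC hI' setU0.
have injf : {in Is X1 X2 &, injective f}.
  move=> A A' AI A'I e. by rewrite -(back A (sub1 A AI)) -(back A' (sub1 A' A'I)) e.
have wA : forall A, A \in Is X1 X2 -> w A = g (f A).
  move=> A AI. have [e _] := Cs_d (symm_swap sy) (fR A AI).
  have I0 : A :&: X2 = set0 by apply/eqP; rewrite -subset0 -hI' setSI // sub1.
  have := cardsUI A X2. rewrite I0 cards0 -/(f A) h2 => e2.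
  rewrite /g /w; move: e e2 hn; clear; lia.
rewrite (eq_bigr _ wA) -(big_imset g injf) /=.
have imR : f @: Is X1 X2 \subset Cs X2 X1.
  by apply/subsetP => Y /imsetP [A AI ->]; exact: fR.
apply: le_trans (lerD (lexx _) (sub_sum_ge imR _)); last first.
  move=> Y _; rewrite /g; clear; lia.
rewrite sum_w /g sum_g.
have sd := Cs_sumd (symm_swap sy).
have eS : SA (Cs X2 X1) + \sum_(Y in Cs X2 X1) #|B :\: Y| = 2 * s * #|Cs X2 X1|.
  rewrite /SA -big_split /= mulnC -sum_nat_const. apply: eq_bigr => Y YC.
  by have [e _] := Cs_d (symm_swap sy) YC.
have p1 : 0 < #|Cs X2 X1| by rewrite card_gt0.
have sp : s <= s * #|Cs X2 X1| by rewrite leq_pmulr.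
have np := np_eq #|Cs X2 X1|.
have sp2 : 2 * #|Cs X2 X1| <= s * #|Cs X2 X1| by rewrite leq_mul2r hs orbT.
move: sd eS p1 sp np sp2 hs; clear; lia.
Qed.

Lemma Cs_pos X1 X2 : symm X1 X2 -> Cs X1 X2 != set0 -> (1 <= \sum_(A in Cs X1 X2) w A)%R.
Proof.
move=> sy1 /set0Pn [Y YC].
have [_ w1] := Cs_w sy1 YC.
have := @sub_sum_le _ [set Y] (Cs X1 X2) w _ _.
rewrite big_set1 => h. apply: le_trans w1 (h _ _).
  by rewrite sub1set.
move=> A AC. have [_ w2] := Cs_w sy1 AC. exact: le_trans w2.
Qed.

Lemma nat_sub_sum (T : finType) (P Q : {set T}) (h : T -> nat) :
  P \subset Q -> \sum_(x in P) h x <= \sum_(x in Q) h x.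
Proof. move=> sPQ. by rewrite [X in _ <= X](big_setID P) (setIidPr sPQ) leq_addr. Qed.

Lemma caseB : Cs S1 S2 != set0 -> Cs S2 S1 != set0 ->
  (- Posz (4 * s) + 2 <= \sum_(A in Cs S1 S2) w A + \sum_(A in Cs S2 S1) w A + \sum_(A in Is S1 S2) w A)%R.
Proof.
move=> C1 R1.
have sy : symm S1 S2 by left; split.
have sy' := symm_swap sy.
have pC := Cs_pos sy C1. have pR := Cs_pos sy' R1.
pose dd (Y : {set 'I_n}) := #|B :\: Y|.
pose f (A : {set 'I_n}) := (A :|: S2, A :|: S1).
pose h (z : {set 'I_n} * {set 'I_n}) := 4 * (dd z.1 * dd z.2).
have fX : forall A, A \in Is S1 S2 -> f A \in setX (Cs S2 S1) (Cs S1 S2).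
  move=> A AI. rewrite inE /=. rewrite (inner_R sy AI R1) /=.
  by rewrite Is_sym in AI; rewrite (inner_R sy' AI C1).
have injf : {in Is S1 S2 &, injective f}.
  move=> A A' _ _ [e1 e2].
  by rewrite -[A]setU0 -[A']setU0 -hI setIC !setUIr e1 e2.
have pt : forall A, A \in Is S1 S2 -> ((Posz (2 * s) - 1) * (- w A) <= Posz (h (f A)))%R.
  move=> A AI.
  have [AF AB _ _] := IsP AI.
  have R2 := inner_R sy AI R1.
  have AI' := AI; rewrite Is_sym in AI'.
  have C2 := inner_R sy' AI' C1.
  have [_ d1] := Cs_d sy' R2.
  have [_ d2] := Cs_d sy C2.
  have eA : #|A| + #|B :\: A| = 2 * s by rewrite -cB -(cardsID A B) (setIidPr AB).
  have eD : #|B :\: A| = dd (A :|: S2) + dd (A :|: S1).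
    have := cardsUI (B :\: (A :|: S2)) (B :\: (A :|: S1)).
    rewrite -setDIr -setUIr (setIC S2) hI setU0 -setDUr.
    have -> : B :\: (A :|: S2 :|: (A :|: S1)) = set0.
      apply/eqP; rewrite setD_eq0 -hU. apply/subsetP => x; rewrite !inE.
      by case/orP => ->; rewrite ?orbT.
    by rewrite cards0 addn0.
  have e : (- w A = 2 * Posz (dd (A :|: S2)) + 2 * Posz (dd (A :|: S1)) + 1 - Posz (2 * s))%R.
    rewrite /w. move: eA eD hn. rewrite /dd. clear. lia.
  rewrite e /h /=. exact: prodb d1 d2.
have key : ((Posz (2 * s) - 1) * (- \sum_(A in Is S1 S2) w A) <= Posz (4 * (s * s)))%R.
  rewrite -sumrN mulr_sumr.
  apply: le_trans (ler_sum _ pt) _.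
  rewrite -(big_morph _ PoszD (erefl (Posz 0))) lez_nat.
  rewrite -(big_imset h injf) /=.
  apply: leq_trans (nat_sub_sum h (_ : f @: Is S1 S2 \subset setX (Cs S2 S1) (Cs S1 S2))) _.
    by apply/subsetP => z /imsetP [A AI ->]; exact: fX.
  rewrite (eq_bigl (fun z => (z.1 \in Cs S2 S1) && (z.2 \in Cs S1 S2))); last first.
    by move=> z; rewrite inE.
  rewrite -(pair_big (fun Y => Y \in Cs S2 S1) (fun Z => Z \in Cs S1 S2) (fun Y Z => 4 * (dd Y * dd Z))) /=.
  rewrite (eq_bigr (fun Y => 4 * dd Y * \sum_(Z in Cs S1 S2) dd Z)); last first.
    by move=> Y _; rewrite big_distrr /=; apply: eq_bigr => Z _; rewrite mulnA.
  rewrite -big_distrl /= -big_distrr /= -mulnA leq_mul2l /=.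
  exact: leq_mul (Cs_sumd sy') (Cs_sumd sy).
have := divb hs key; move: pC pR; clear; lia.
Qed.

Lemma case3_G : (- Posz n <= \sum_(A in G) w A)%R.
Proof.
have n21 : ~~ (S2 \subset S1).
  apply/negP => h. have : S2 \subset S1 :&: S2 by rewrite subsetI h subxx.
  rewrite hI subset0 => /eqP e. by move: c2; rewrite e cards0 => e2; move: hs; rewrite -e2.
have n12 : ~~ (S1 \subset S2).
  apply/negP => h. have : S1 \subset S1 :&: S2 by rewrite subsetI h subxx.
  rewrite hI subset0 => /eqP e. by move: c1; rewrite e cards0 => e2; move: hs; rewrite -e2.
rewrite (decomp hU S1F S2F n21 n12).
have wB : (w B = Posz (2 * s) - 1)%R by rewrite /w cB; have := hn; lia.
have w1 : (w S1 = - 1)%R by rewrite /w c1; have := hn; lia.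
have w2 : (w S2 = - 1)%R by rewrite /w c2; have := hn; lia.
have main : (- Posz (4 * s) + 2 <= \sum_(A in Cs S1 S2) w A + \sum_(A in Cs S2 S1) w A + \sum_(A in Is S1 S2) w A)%R.
  case: (eqVneq (Cs S1 S2) set0) => [C0|C1].
    by apply: caseA => //; left.
  case: (eqVneq (Cs S2 S1) set0) => [R0|R1].
    have := caseA (or_intror (conj erefl erefl)) R0; rewrite Is_sym; clear; lia.
  exact: caseB.
move: main; rewrite wB w1 w2. have := hn. lia.
Qed.

End Case3.

Lemma case3_card X0 Y0 : X0 \in F -> Y0 \in F -> X0 \proper Y0 -> Y0 \proper B -> #|B| + 1 = n.
Proof.
move=> X0F Y0F p01 p0B.
have M'0 : M' = set0.
  apply/setP => M; rewrite in_set0; apply/negbTE/negP => MM.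
  move: (MM); rewrite !inE => /and3P [MT MF pM].
  have pMT : M \proper setT by rewrite properEneq MT subsetT.
  by case: (no5 hF X0F Y0F BF MF topF p01 p0B pM pMT).
have sc : #|~: B| <= #|M'| + 1 by apply: sep_count => X Y; rewrite M'0 inE.
rewrite M'0 cards0 in sc.
have bn : #|B| < n.
  have : B \proper setT by rewrite properEneq BT subsetT.
  by move/proper_card; rewrite cardsT card_ord.
have cC := cardsC B. rewrite card_ord in cC.
lia.
Qed.

Lemma case3 X0 Y0 S1 S2 : X0 \in F -> Y0 \in F -> X0 \proper Y0 -> Y0 \proper B ->
  S1 \in F -> S2 \in F -> S1 :|: S2 = B -> 2 * #|S1| < n -> 2 * #|S2| < n ->
  (0 <= \sum_(A in F) w A)%R.
Proof.
move=> X0F Y0F p01 p0B S1F S2F hU l1 l2.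
have cb := case3_card X0F Y0F p01 p0B.
have M'0 : M' = set0.
  apply/setP => M; rewrite in_set0; apply/negbTE/negP => MM.
  move: (MM); rewrite !inE => /and3P [MT MF pM].
  have pMT : M \proper setT by rewrite properEneq MT subsetT.
  by case: (no5 hF X0F Y0F BF MF topF p01 p0B pM pMT).
have := cardsUI S1 S2. rewrite hU => eU.
have [hI0 [c2 [hn hs]]] : #|S1 :&: S2| = 0 /\ #|S2| = #|S1| /\ n = 2 * #|S1| + 1 /\ 2 <= #|S1|.
  by move: eU l1 l2 cb n4; clear; lia.
have hI : S1 :&: S2 = set0 by apply/eqP; rewrite -cards_eq0 hI0.
apply: reduce.
have := case3_G S1F S2F hU hI erefl c2 hn hs.
rewrite sumMp M'0 big_set0 addr0 wT. clear; lia.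
Qed.

Lemma core_all :
  (#|B| + 1 = n -> exists S1 S2, [/\ S1 \in F, S2 \in F, S1 :|: S2 = B, 2 * #|S1| < n & 2 * #|S2| < n]) ->
  (0 <= \sum_(A in F) w A)%R.
Proof.
move=> hII.
case: (boolP [forall A in F, (A \subset B) ==> (A == B)]) => h.
  apply: case1 => A AF AB. apply/eqP.
  by move/forall_inP: h => /(_ A AF); rewrite AB.
move: h; rewrite negb_forall_in => /exists_inP [A0 A0F].
rewrite negb_imply => /andP [A0B nA0].
have pA0 : A0 \proper B by rewrite properEneq nA0 A0B.
case: (boolP [exists X in F, exists Y in F, (X \proper Y) && (Y \proper B)]).
  move=> /exists_inP [X0 X0F /exists_inP [Y0 Y0F /andP [p01 p0B]]].
  have [S1 [S2 [S1F S2F hU l1 l2]]] := hII (case3_card X0F Y0F p01 p0B).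
  exact: case3 X0F Y0F p01 p0B S1F S2F hU l1 l2.
move=> hn3. apply: (case2 A0F pA0).
move=> X Y XF YF pXY pYB. move: hn3; rewrite negb_exists_in => /forall_inP /(_ X XF).
rewrite negb_exists_in => /forall_inP /(_ Y YF). by rewrite pXY pYB.
Qed.

End Core.


Lemma conv (n c S : nat) : 0 < c -> n * c <= 2 * S -> ((n%:R / 2%:R : rat) <= S%:R / c%:R)%R.
Proof.
move=> c0 h.
rewrite ler_pdivlMr ?ltr0n // mulrAC ler_pdivrMr ?ltr0n //.
by rewrite -!natrM ler_nat [S * 2]mulnC.
Qed.

Theorem theorem2p1 (n : nat) (F : {set {set 'I_n}}) :
  union_closed F -> separating F -> bU F = [set: 'I_n] ->
  height F = 4 -> 4 <= n ->
  (exists S, is_B F S /\ #|S| <= 2) ->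
  ((n%:R / 2%:R : rat) <= Avg F)%R.
Proof.
move=> [[X0 X0F _] uc] sep bUF hF n4 [S [isB cS]].
have topF : setT \in F by rewrite -bUF /bU; exact: (bigcup_in_F uc (subxx F) X0F).
have cF : 0 < #|F| by rewrite card_gt0; apply/set0Pn; exists X0.
suff key : (0 <= \sum_(A in F) w A)%R.
  rewrite /Avg; apply: conv => //.
  move: key; rewrite sum_w /SA. lia.
move: isB => /andP [/and3P [sS irrS /eqP bS] _].
set small := small_part F in sS bS.
case: (set_0Vmem small) => [s0|[Z0 Z0s]].
  apply: sumr_ge0 => A AF. rewrite /w.
  have : A \notin small by rewrite s0 inE.
  rewrite inE AF /= -leqNgt. lia.
set B := bU small in bS.
have smallF : small \subset F by apply/subsetP => A; rewrite inE => /andP [].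
have BF : B \in F by rewrite /B /bU; exact: bigcup_in_F uc smallF Z0s.
have large : forall A, A \in F -> ~~ (A \subset B) -> n <= 2 * #|A|.
  move=> A AF nAB. rewrite leqNgt. apply: contra nAB => h.
  apply: (bigcup_sup A). rewrite /small /small_part inE AF /=. by rewrite -mul2n.
have Ssmall : forall X, X \in S -> X \in F /\ 2 * #|X| < n.
  move=> X XS. have := subsetP sS X XS. by rewrite inE => /andP [-> /= ?]; split => //; lia.
have shape : (B = set0) \/ (exists X, [/\ X \in F, 2 * #|X| < n & B = X]) \/
             (exists X Y, [/\ X \in F, Y \in F, 2 * #|X| < n, 2 * #|Y| < n & B = X :|: Y]).
  rewrite -bS /bU.
  move: cS; rewrite leq_eqVlt ltnS leq_eqVlt ltnS leqn0.
  case/orP => [/cards2P [X [Y [XY eS]]]|/orP [/cards1P [X eS]|/eqP/cards0_eq eS]].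
  - right; right. exists X, Y.
    have XS : X \in S by rewrite eS !inE eqxx.
    have [XF lX] := Ssmall X XS.
    have YS : Y \in S by rewrite eS !inE eqxx orbT.
    have [YF lY] := Ssmall Y YS.
    split => //. rewrite eS big_setU1 ?big_set1 //. by rewrite inE.
  - right; left. exists X.
    have XS : X \in S by rewrite eS !inE eqxx.
    have [XF lX] := Ssmall X XS.
    by split => //; rewrite eS big_set1.
  - left. by rewrite eS big_set0.
have BT : B != setT.
  apply/negP => /eqP eB.
  have cB : #|B| = n by rewrite eB cardsT card_ord.
  case: shape => [e|[[X [_ lX e]]|[X [Y [_ _ lX lY e]]]]].
  - by move: cB; rewrite e cards0 => e0; move: n4; rewrite -e0.
  - by move: cB lX; rewrite e => ->; lia.
  - move: (leq_card_setU X Y).1. rewrite -e cB. move: lX lY; clear; lia.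
apply: (core_all (B := B) uc sep topF hF n4 BF BT large).
move=> cB.
case: shape => [e|[[X [_ lX e]]|[X [Y [XF YF lX lY e]]]]].
- by move: cB; rewrite e cards0; lia.
- by move: cB lX; rewrite e; lia.
- by exists X, Y; split.
Qed.
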